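(* Let $\mathcal{M}$ be a circular embedding of a connected graph $X$ with $n$ vertices and $s$ faces on a closed orientable surface. Let $U$ be its vertex-face transition matrix, $C$ its vertex-face incidence matrix, and $\widehat C=\widehat N^T\widehat M$ its normalized vertex-face incidence matrix. Then the $(-1)$-eigenspace of $U$ is \[\widehat M\ker(\widehat C)\oplus\widehat N\ker(\widehat C^T),\] and it has dimension $n+s-2\operatorname{rk}(C)$.
   Context: Setting. A circular embedding is a cellular embedding in which every face is bounded by a cycle. Arcs are ordered pairs $(u,v)$ with $\{u,v\}$ an edge, and $u$ is the tail. Consistent orientation. Fix an orientation of the face boundaries such that each edge shared by two faces receives opposite directions in them. Then every arc lies in exactly one facial walk. Matrices. - $M$ is the arc-face incidence matrix ($M_{(a,b),f}=1$ iff $(a,b)$ lies in the facial walk of $f$). - $N$ is the arc-tail incidence matrix ($N_{(a,b),u}=1$ iff $a=u$). - $\widehat M,\widehat N$ are these matrices with columns scaled to unit length. - $U=(2\widehat M\widehat M^T-I)(2\widehat N\widehat N^T-I)$ is the vertex-face transition matrix. - $C$ is the $n\times s$ matrix with $C_{u,f}=1$ iff $u$ lies on face $f$; equivalently $C=N^TM$. *)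

(* Defs.v *)
From HB Require Import structures.
From mathcomp Require Import all_boot all_order all_algebra all_fingroup.
Set Implicit Arguments. Unset Strict Implicit. Unset Printing Implicit Defensive.
Import Order.TTheory GRing.Theory Num.Theory.
Local Open Scope ring_scope.

(* Combinatorial model of a cellular embedding of a simple graph on a closed
   orientable surface (Heffter--Edmonds rotation systems).  Arcs: 'I_m; arc a is the ordered pair (tl a, hd a), and
   the arcs are exactly the ordered pairs (u,v) with {u,v} an edge.
   rev a is the reverse arc.  rho is the rotation (a permutation of the arcs
   preserving tails and cyclically permuting the arcs with a given tail).
   The (consistently oriented) facial walks are the orbits of the face
   permutation phi a = rho (rev a) (note tl (phi a) = hd a); the faces are
   labelled by 'I_s through the map face. *)

Definition face_perm m (rev : 'I_m -> 'I_m) (rho : {perm 'I_m}) : 'I_m -> 'I_m :=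
  fun a => rho (rev a).

Definition simple_graph n (adj : rel 'I_n) : Prop :=
  (forall u, ~~ adj u u) /\ (forall u v, adj u v = adj v u).

Definition connected_graph n (adj : rel 'I_n) : Prop :=
  forall u v, connect adj u v.

Definition arc_structure n m (adj : rel 'I_n) (tl hd : 'I_m -> 'I_n)
    (rev : 'I_m -> 'I_m) : Prop :=
  [/\ forall a b, tl a = tl b -> hd a = hd b -> a = b,
      forall u v, adj u v <-> exists a, tl a = u /\ hd a = v
    & forall a, tl (rev a) = hd a /\ hd (rev a) = tl a].

Definition rotation_system n m (tl : 'I_m -> 'I_n) (rho : {perm 'I_m}) : Prop :=
  (forall a, tl (rho a) = tl a) /\
  (forall a b, tl a = tl b -> fconnect rho a b).

Definition face_labelling m s (phi : 'I_m -> 'I_m) (face : 'I_m -> 'I_s)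
  : Prop :=
  (forall a b, face a = face b <-> fconnect phi a b) /\
  (forall f, exists a, face a = f).

(* Orientable cellular embedding of the connected simple graph adj with
   n vertices, m arcs and s faces. The graph has at least one edge (the
   one-vertex graph has no circular embedding). *)
Definition orientable_embedding n m s (adj : rel 'I_n) (tl hd : 'I_m -> 'I_n)
    (rev : 'I_m -> 'I_m) (rho : {perm 'I_m}) (face : 'I_m -> 'I_s) : Prop :=
  [/\ simple_graph adj /\ connected_graph adj, (0 < m)%N,
      arc_structure adj tl hd rev, rotation_system tl rho
    & face_labelling (face_perm rev rho) face].

(* circular: every facial walk is a cycle, i.e. it has length >= 3 and
   visits each vertex at most once *)
Definition circular m s n (tl : 'I_m -> 'I_n) (face : 'I_m -> 'I_s) : Prop :=
  (forall a b, face a = face b -> tl a = tl b -> a = b) /\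
  (forall f, (3 <= #|[set a | face a == f]|)%N).

Definition arc_face_mx (R : nzRingType) m s (face : 'I_m -> 'I_s)
  : 'M[R]_(m, s) := \matrix_(a, f) (face a == f)%:R.

Definition arc_tail_mx (R : nzRingType) m n (tl : 'I_m -> 'I_n)
  : 'M[R]_(m, n) := \matrix_(a, u) (tl a == u)%:R.

Definition normalize_cols (R : rcfType) p q (A : 'M[R]_(p, q)) : 'M[R]_(p, q) :=
  \matrix_(i, j) (A i j / Num.sqrt (\sum_k A k j ^+ 2)).

Definition transition_mx (R : rcfType) m s n (Mh : 'M[R]_(m, s))
    (Nh : 'M[R]_(m, n)) : 'M[R]_m :=
  (2%:R *: (Mh *m Mh^T) - 1%:M) *m (2%:R *: (Nh *m Nh^T) - 1%:M).

(* Main.v *)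
Require Import Defs.
From HB Require Import structures.
From mathcomp Require Import all_boot all_order all_algebra all_fingroup.
From mathcomp Require Import zify.
Import Order.TTheory GRing.Theory Num.Theory.
Local Open Scope ring_scope.

Section Lin.
Variables (R : rcfType) (m s n : nat) (Mh : 'M[R]_(m, s)) (Nh : 'M[R]_(m, n)).
Hypotheses (hM : Mh^T *m Mh = 1%:M) (hN : Nh^T *m Nh = 1%:M).

Let P := Mh *m Mh^T.
Let Q := Nh *m Nh^T.

Lemma refl_mul k (Y : 'M[R]_(k, m)) (A : 'M[R]_m) :
  Y *m (2%:R *: A - 1%:M) = 2%:R *: (Y *m A) - Y.
Proof. by rewrite mulmxBr scalemxAr mulmx1. Qed.

Lemma PP : P *m P = P.
Proof. by rewrite /P mulmxA -(mulmxA Mh) hM mulmx1. Qed.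

Lemma UT : (transition_mx Mh Nh)^T = (2%:R *: Q - 1%:M) *m (2%:R *: P - 1%:M).
Proof.
rewrite /transition_mx trmx_mul !linearB /= !linearZ /= !trmx_mul !trmxK trmx1.
by [].
Qed.

Lemma BB k (Y : 'M[R]_(k, m)) : Y *m (2%:R *: P - 1%:M) *m (2%:R *: P - 1%:M) = Y.
Proof.
rewrite !refl_mul mulmxBl -scalemxAl -mulmxA PP scalerBr.
set a := 2%:R *: (Y *m P).
by rewrite scaler_nat mulr2n addrK opprB addrC subrK.
Qed.


Let Ch := Nh^T *m Mh.
Let K1 := kermx Ch^T *m Mh^T.
Let K2 := kermx Ch *m Nh^T.
Let E := eigenspace (transition_mx Mh Nh)^T (-1).

Lemma ChT : Ch^T = Mh^T *m Nh.
Proof. by rewrite /Ch trmx_mul trmxK. Qed.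

Lemma K1P : K1 *m P = K1.
Proof. by rewrite /K1 /P -!mulmxA (mulmxA Mh^T) hM mul1mx. Qed.

Lemma K1N : K1 *m Nh = 0.
Proof. by rewrite /K1 -mulmxA -ChT mulmx_ker. Qed.

Lemma K2Q : K2 *m Q = K2.
Proof. by rewrite /K2 /Q -!mulmxA (mulmxA Nh^T) hN mul1mx. Qed.

Lemma K2M : K2 *m Mh = 0.
Proof. by rewrite /K2 -mulmxA mulmx_ker. Qed.

Lemma K1sub : (K1 <= E)%MS.
Proof.
have hA : K1 *m (2%:R *: Q - 1%:M) = - K1.
  by rewrite refl_mul /Q mulmxA K1N mul0mx scaler0 sub0r.
apply/eigenspaceP; rewrite UT mulmxA hA mulNmx refl_mul K1P scaleN1r.
by rewrite scaler_nat mulr2n addrK.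
Qed.

Lemma K2sub : (K2 <= E)%MS.
Proof.
have hA : K2 *m (2%:R *: Q - 1%:M) = K2.
  by rewrite refl_mul K2Q scaler_nat mulr2n addrK.
apply/eigenspaceP; rewrite UT mulmxA hA.
by rewrite refl_mul /P mulmxA K2M mul0mx scaler0 sub0r scaleN1r.
Qed.

Lemma Esub : (E <= K1 + K2)%MS.
Proof.
have hX : E *m (transition_mx Mh Nh)^T = -1 *: E by apply/eigenspaceP.
rewrite UT in hX.
set A := (2%:R *: Q - 1%:M) in hX *.
set B := (2%:R *: P - 1%:M) in hX *.
have hA : E *m A = - (E *m B).
  by rewrite -[LHS](@BB _ (E *m A)) -(mulmxA E A B) hX scaleN1r mulNmx.
rewrite /A /B !refl_mul in hA.
have h2 : 2%:R *: (E *m P + E *m Q - E) = 0.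
  rewrite scalerBr scalerDr [2%:R *: E]scaler_nat mulr2n opprD addrACA addrC.
  by rewrite hA addNr.
have hab : E *m P + E *m Q = E.
  apply/eqP; rewrite -subr_eq0; move/eqP: h2; rewrite scaler_eq0.
  by rewrite pnatr_eq0.
have hb : E *m P = E - E *m Q by rewrite -[X in X - _]hab addrK.
have ha : E *m Q = E - E *m P by rewrite -[X in X - _]hab addrAC subrr add0r.
rewrite -[X in (X <= _)%MS]hab; apply: addmx_sub_adds.
  rewrite /K1 /P mulmxA; apply: submxMr; apply/sub_kermxP.
  rewrite ChT !mulmxA -(mulmxA E Mh) -/P hb mulmxBl /Q -!mulmxA hN mulmx1.
  by rewrite subrr.
rewrite /K2 /Q mulmxA; apply: submxMr; apply/sub_kermxP.
rewrite /Ch !mulmxA -(mulmxA E Nh) -/Q ha mulmxBl /P -!mulmxA hM mulmx1.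
by rewrite subrr.
Qed.

Lemma Kdirect : mxdirect (K1 + K2).
Proof.
apply/mxdirect_addsP.
have [D1 hD1] := submxP (capmxSl K1 K2).
have [D2 hD2] := submxP (capmxSr K1 K2).
have e1 : (K1 :&: K2)%MS *m P = (K1 :&: K2)%MS by rewrite hD1 -mulmxA K1P.
have e2 : (K1 :&: K2)%MS *m P = 0.
  by rewrite hD2 /P mulmxA -(mulmxA D2 K2 Mh) K2M mulmx0 mul0mx.
by rewrite -e1 e2.
Qed.

Lemma lin_main :
  [/\ (K1 + K2 == E)%MS, mxdirect (K1 + K2)
    & \rank E = (n + s - 2 * \rank Ch)%N].
Proof.
have eq : (K1 + K2 == E)%MS.
  by apply/andP; split; [rewrite addsmx_sub K1sub K2sub | exact: Esub].
split => //; first exact: Kdirect.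
move/eqmxP: eq => <-.
rewrite mxrank_disjoint_sum; last exact/mxdirect_addsP/Kdirect.
rewrite /K1 /K2 (mxrankMfree (kermx Ch^T)); last first.
  by apply/row_freeP; exists Mh; rewrite ?trmxK.
rewrite (mxrankMfree (kermx Ch)); last first.
  by apply/row_freeP; exists Nh; rewrite ?trmxK.
rewrite !mxrank_ker mxrank_tr.
have := rank_leq_row Ch; have := rank_leq_col Ch.
move: (\rank Ch) => r h1 h2; lia.
Qed.

End Lin.
Section Comb.
Variables (R : rcfType) (m k : nat) (g : 'I_m -> 'I_k).
Hypothesis gsurj : forall f, exists a, g a = f.

Let A : 'M[R]_(m, k) := \matrix_(a, f) (g a == f)%:R.
Let c f : R := \sum_a ((g a == f)%:R : R).

Lemma c_gt0 f : 0 < c f.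
Proof.
have [a0 ha0] := gsurj f.
rewrite /c (bigD1 a0) //= ha0 eqxx.
have : 0 <= \sum_(i | i != a0) ((g i == f)%:R : R) by apply: sumr_ge0 => i _.
by move=> h; apply: (lt_le_trans ltr01); rewrite lerDl.
Qed.

Lemma nentry a f : normalize_cols A a f = (g a == f)%:R / Num.sqrt (c f).
Proof.
rewrite mxE /A mxE; congr (_ / Num.sqrt _); apply: eq_bigr => i _; rewrite mxE.
by case: (g i == f); rewrite ?expr1n // expr2 mul0r.
Qed.

Lemma nentry_diag : normalize_cols A = A *m diag_mx (\row_f (Num.sqrt (c f))^-1).
Proof. by apply/matrixP => a f; rewrite nentry mul_mx_diag !mxE. Qed.

Lemma orth_cols : (normalize_cols A)^T *m normalize_cols A = 1%:M.
Proof.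
have hE := nentry; move: (normalize_cols A) hE => Mh hE.
apply/matrixP => f h; rewrite !mxE.
under eq_bigr => a _ do rewrite mxE !hE.
case: (eqVneq f h) => [<-|fh].
  under eq_bigr => a _ do rewrite mulrACA -natrM mulnb andbb -invfM.
  rewrite -big_distrl /= -expr2 sqr_sqrtr; last exact: ltW (c_gt0 f).
  by rewrite divff // gt_eqF // c_gt0.
rewrite big1 // => a _.
case: (eqVneq (g a) f) => [e|ne]; last by rewrite mul0r mul0r.
have : g a != h by rewrite e.
by move/negPf ->; rewrite mul0r mulr0.
Qed.

Lemma diag_inv_r : diag_mx (\row_f (Num.sqrt (c f))^-1) *m diag_mx (\row_f (Num.sqrt (c f))) = 1%:M :> 'M[R]_k.
Proof.
apply/matrixP => i j; rewrite mul_diag_mx !mxE.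
have [_|ij] := eqVneq i j; last by rewrite mulr0n mulr0.
rewrite /= mulr1n mulVf // sqrtr_eq0 -ltNge; exact: c_gt0.
Qed.

Lemma diag_inv_l : diag_mx (\row_f (Num.sqrt (c f))) *m diag_mx (\row_f (Num.sqrt (c f))^-1) = 1%:M :> 'M[R]_k.
Proof.
apply/matrixP => i j; rewrite mul_diag_mx !mxE.
have [_|ij] := eqVneq i j; last by rewrite mulr0n mulr0.
rewrite /= mulr1n mulfV // sqrtr_eq0 -ltNge; exact: c_gt0.
Qed.

End Comb.

Lemma rank_sandwich (R : fieldType) k l p q (A : 'M[R]_(k, l)) (A' : 'M_(l, k))
  (X : 'M_(l, p)) (B : 'M_(p, q)) (B' : 'M_(q, p)) :
  A' *m A = 1%:M -> B *m B' = 1%:M -> \rank (A *m X *m B) = \rank X.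
Proof.
move=> hA hB; apply/eqP; rewrite eqn_leq; apply/andP; split.
  exact: leq_trans (mxrankM_maxl _ _) (mxrankM_maxr _ _).
have hX : A' *m (A *m X *m B) *m B' = X.
  by rewrite !mulmxA hA mul1mx -mulmxA hB mulmx1.
rewrite -{1}hX.
exact: leq_trans (mxrankM_maxl _ _) (mxrankM_maxr _ _).
Qed.

Theorem theorem3p3 (R : rcfType) (n m s : nat) (adj : rel 'I_n)
    (tl hd : 'I_m -> 'I_n) (rev : 'I_m -> 'I_m) (rho : {perm 'I_m})
    (face : 'I_m -> 'I_s) :
  orientable_embedding adj tl hd rev rho face ->
  circular tl face ->
  let M : 'M[R]_(m, s) := arc_face_mx R face in
  let N : 'M[R]_(m, n) := arc_tail_mx R tl in
  let Mh := normalize_cols M in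
  let Nh := normalize_cols N in
  let U := transition_mx Mh Nh in
  let C := N^T *m M in
  let Ch := Nh^T *m Mh in
  let E := eigenspace U^T (-1) in
  let K1 := kermx Ch^T *m Mh^T in
  let K2 := kermx Ch *m Nh^T in
  [/\ (K1 + K2 == E)%MS, mxdirect (K1 + K2)
    & \rank E = (n + s - 2 * \rank C)%N].
Proof.
move=> [[hsimp hconn] hm0 [hinj harc hrev] _ [_ fsurj]] _ M N Mh Nh U C Ch E K1 K2.
have tsurj : forall u, exists a, tl a = u.
  move=> u; pose a0 := Ordinal hm0.
  have [e|ne] := eqVneq u (tl a0); first by exists a0; rewrite e.
  have /connectP [p hp hl] := hconn u (tl a0).
  case: p hp hl => [|v p] /=; first by move=> _ e; rewrite e eqxx in ne.
  case/andP => huv _ _; have [a [ha _]] := (harc u v).1 huv.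
  by exists a.
have hM : Mh^T *m Mh = 1%:M by exact: (@orth_cols R _ _ face fsurj).
have hN : Nh^T *m Nh = 1%:M by exact: (@orth_cols R _ _ tl tsurj).
have [h1 h2 h3] := @lin_main R m s n Mh Nh hM hN.
split; [exact: h1 | exact: h2 |]; rewrite h3; congr (_ - _)%N; congr (2 * _)%N.
rewrite /Ch /Mh /Nh /M /N /arc_face_mx /arc_tail_mx.
rewrite (@nentry_diag R _ _ face) (@nentry_diag R _ _ tl).
rewrite trmx_mul tr_diag_mx mulmxA -(mulmxA (diag_mx _)).

exact: rank_sandwich (@diag_inv_l R _ _ tl tsurj) (@diag_inv_r R _ _ face fsurj).
Qed.
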